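(* Let $(\mathfrak{g},V,\Theta)$ be a Lie-Leibniz triple with associated graded Lie algebra $T_{\leq-1}$. Then $m\circ q+q\circ m=0$ as maps $\Lambda^3(T_{\leq-1})\to T_{\leq-1}$; that is, for every $i\geq1$ the maps $m\circ q$ and $-q\circ m$ from $\Lambda^3(T_{\leq-1})|_{-i-2}$ to $T_{-i-1}$ coincide.
   Context: A (left) Leibniz algebra is a vector space $V$ with bilinear $\circ$ satisfying $x\circ(y\circ z)=(x\circ y)\circ z+y\circ(x\circ z)$; $\{x,y\}=\frac12(x\circ y+y\circ x)$. A Lie-Leibniz triple $(\mathfrak{g},V,\Theta)$ consists of a Lie algebra $\mathfrak{g}$, a $\mathfrak{g}$-module $V$ (action $a\cdot x$) with a Leibniz product $\circ$, and a linear map $\Theta:V\to\mathfrak{g}$ with $x\circ y=\Theta(x)\cdot y$ and $\Theta(x\circ y)=[\Theta(x),\Theta(y)]$. Associated graded Lie algebra: let $K$ be the largest $\mathfrak{g}$-submodule of $S^2(V)$ contained in the kernel of $x\odot y\mapsto\{x,y\}$; let $F$ be the free graded Lie algebra on $V[1]$ (degree $-1$), $F_{-2}\cong S^2(V)$, with $\mathfrak g$ acting by derivations; $K_{-2}=K$, $K_{-i}=\sum_{j=1}^{i-2}[F_{-j},K_{-i+j}]$ ($i\geq3$); $T_{\leq-1}=F/K_\bullet$, $T_{-1}=V[1]$, with induced bracket $\llbracket\,.\,,.\,\rrbracket$ and $\mathfrak g$-action. $\Lambda^\bullet(T_{\leq-1})$ is the graded exterior algebra ($x\wedge y=-(-1)^{|x||y|}y\wedge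 x$), $|_{-i}$ the total-degree $-i$ part. Define $q:\Lambda^2(T_{\leq-1})\to T_{\leq-1}$ by $q(x\wedge y)=\llbracket x,y\rrbracket$ and $m:\Lambda^2(T_{\leq-1})\to T_{\leq-1}$ by $m(x\wedge y)=\Theta(x)\cdot y-(-1)^{|x||y|}\Theta(y)\cdot x$, where $\Theta$ is taken to be $0$ on $T_{\leq-2}$ (so $m(u\wedge v)=2\{u,v\}$ for $u,v\in T_{-1}$, $m(u\wedge x)=\Theta(u)\cdot x$ for $u\in T_{-1}$, $x\in T_{\leq -2}$, and $m=0$ on $\Lambda^2(T_{\leq-2})$). Both extend to $\Lambda^p$ ($p\geq3$) by $f(x_1\wedge\cdots\wedge x_p)=\sum_{\sigma\in\mathrm{Un}(2,p-2)}\epsilon^\sigma f(x_{\sigma(1)}\wedge x_{\sigma(2)})\wedge x_{\sigma(3)}\wedge\cdots\wedge x_{\sigma(p)}$, with $\mathrm{Un}(2,p-2)$ the $(2,p-2)$-unshuffles and $\epsilon^\sigma$ the Koszul sign. *)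

(* Defs.v *)
From HB Require Import structures.
From mathcomp Require Import all_boot all_order all_algebra.
Set Implicit Arguments. Unset Strict Implicit. Unset Printing Implicit Defensive.
Import GRing.Theory.
Local Open Scope ring_scope.

Section LieLeibniz.
Variable K : fieldType.

Definition lin (U W : lmodType K) (f : U -> W) : Prop :=
  forall (k : K) x y, f (k *: x + y) = k *: f x + f y.

Definition bilin (A B C : lmodType K) (b : A -> B -> C) : Prop :=
  (forall y, lin (fun x => b x y)) /\ (forall x, lin (b x)).

Definition lie_algebra (G : lmodType K) (lb : G -> G -> G) : Prop :=
  [/\ bilin lb, (forall a, lb a a = 0) &
      (forall a b c, lb a (lb b c) + lb b (lb c a) + lb c (lb a b) = 0)].

Definition lie_module (G : lmodType K) (lb : G -> G -> G)
    (V : lmodType K) (act : G -> V -> V) : Prop :=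
  bilin act /\
  (forall a b x, act (lb a b) x = act a (act b x) - act b (act a x)).

Definition lprod (G V : lmodType K) (act : G -> V -> V) (Th : V -> G) (x y : V) : V :=
  act (Th x) y.

Definition lie_leibniz_triple (G : lmodType K) (lb : G -> G -> G)
    (V : lmodType K) (act : G -> V -> V) (Th : V -> G) : Prop :=
  [/\ lie_algebra lb, lie_module lb act, lin Th,
      (forall x y z, lprod act Th x (lprod act Th y z) =
          lprod act Th (lprod act Th x y) z + lprod act Th y (lprod act Th x z)) &
      (forall x y, Th (lprod act Th x y) = lb (Th x) (Th y))].

Definition symb (G V : lmodType K) (act : G -> V -> V) (Th : V -> G) (x y : V) : V :=
  (2 : K)^-1 *: (lprod act Th x y + lprod act Th y x).

(* Elements of S^2(V) are represented by finite lists s of pairs (u, v),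
   standing for sum_{(u,v) in s} u (.) v. *)
Definition act_S2 (G V : lmodType K) (act : G -> V -> V) (a : G)
    (s : seq (V * V)) : seq (V * V) :=
  flatten (map (fun p => [:: (act a p.1, p.2); (p.1, act a p.2)]) s).

Definition symb_S2 (G V : lmodType K) (act : G -> V -> V) (Th : V -> G)
    (s : seq (V * V)) : V :=
  \sum_(p <- s) symb act Th p.1 p.2.

(* s lies in K = the largest g-submodule of S^2(V) contained in the kernel
   of x (.) y |-> {x,y}, i.e. a_1 . (a_2 . ( ... (a_n . s))) lies in that
   kernel for every word a_1 ... a_n in g. *)
Definition inK (G V : lmodType K) (act : G -> V -> V) (Th : V -> G)
    (s : seq (V * V)) : Prop :=
  forall w : seq G, symb_S2 act Th (foldr (act_S2 act) s w) = 0.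

(* Graded vector spaces concentrated in degrees -1, -2, ... :
   hom n x  means  x is homogeneous of degree -n;  L = (+)_{n >= 1} L_{-n}. *)
Definition graded (L : lmodType K) (hom : nat -> L -> Prop) : Prop :=
  [/\ (forall n, hom n 0),
      (forall n (k : K) x y, hom n x -> hom n y -> hom n (k *: x + y)),
      (forall x, hom 0%N x -> x = 0),
      (forall x, exists s : seq (nat * L),
          (forall p, p \in s -> hom p.1 p.2) /\ x = \sum_(p <- s) p.2) &
      (forall s : seq (nat * L), uniq (map fst s) ->
          (forall p, p \in s -> hom p.1 p.2) ->
          \sum_(p <- s) p.2 = 0 -> forall p, p \in s -> p.2 = 0)].

(* Graded Lie algebras concentrated in degrees <= -1 (Koszul sign
   (-1)^{|x||y|} = (-1)^{i j} for |x| = -i, |y| = -j). *)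
Definition graded_lie (L : lmodType K) (hom : nat -> L -> Prop)
    (br : L -> L -> L) : Prop :=
  [/\ graded hom, bilin br,
      (forall i j x y, hom i x -> hom j y -> hom (i + j)%N (br x y)),
      (forall i j x y, hom i x -> hom j y ->
          br x y = - (((-1 : K) ^+ (i * j)) *: br y x)) &
      (forall i j k x y z, hom i x -> hom j y -> hom k z ->
          br x (br y z) = br (br x y) z + ((-1 : K) ^+ (i * j)) *: br y (br x z))].

Definition graded_lie_morph (L M : lmodType K) (homL : nat -> L -> Prop)
    (brL : L -> L -> L) (homM : nat -> M -> Prop) (brM : M -> M -> M)
    (f : L -> M) : Prop :=
  [/\ lin f, (forall n x, homL n x -> homM n (f x)) &
      (forall x y, f (brL x y) = brM (f x) (f y))].

(* (T, hom, br) together with iota : V ~ T_{-1} (inverse jT) and the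
   g-action actT is the associated graded Lie algebra T_{<=-1} = F / K_.
   It is characterised by its universal property: the free graded Lie
   algebra on V[1] modulo the relations K in degree -2. *)
Definition assoc_graded_lie (G : lmodType K) (lb : G -> G -> G)
    (V : lmodType K) (act : G -> V -> V) (Th : V -> G)
    (T : lmodType K) (hom : nat -> T -> Prop) (br : T -> T -> T)
    (actT : G -> T -> T) (iota : V -> T) (jT : T -> V) : Prop :=
  [/\ graded_lie hom br,
      [/\ lin iota, (forall u, hom 1%N (iota u)), (forall u, jT (iota u) = u) &
          (forall x, hom 1%N x -> iota (jT x) = x)],
      [/\ bilin actT, (forall a n x, hom n x -> hom n (actT a x)),
          (forall a b x, actT (lb a b) x = actT a (actT b x) - actT b (actT a x)),
          (forall a x y, actT a (br x y) = br (actT a x) y + br x (actT a y)) &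
          (forall a u, actT a (iota u) = iota (act a u))],
      (forall s, inK act Th s -> \sum_(p <- s) br (iota p.1) (iota p.2) = 0) &
      [/\
      (forall P : T -> Prop, P 0 -> (forall (k : K) x y, P x -> P y -> P (k *: x + y)) ->
          (forall u, P (iota u)) -> (forall x y, P x -> P y -> P (br x y)) ->
          forall x, P x) &
      (forall (L : lmodType K) (homL : nat -> L -> Prop) (brL : L -> L -> L)
              (phi : V -> L),
          graded_lie homL brL -> lin phi -> (forall u, homL 1%N (phi u)) ->
          (forall s, inK act Th s -> \sum_(p <- s) brL (phi p.1) (phi p.2) = 0) ->
          (exists f : T -> L, graded_lie_morph hom br homL brL f /\
                              forall u, f (iota u) = phi u) /\
          (forall f f' : T -> L,
              graded_lie_morph hom br homL brL f -> (forall u, f (iota u) = phi u) ->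
              graded_lie_morph hom br homL brL f' -> (forall u, f' (iota u) = phi u) ->
              forall x, f x = f' x))]].

(* m on Lambda^2 for homogeneous x in T_{-i}, y in T_{-j}:
   m(x ^ y) = Theta(x).y - (-1)^{ij} Theta(y).x, with Theta = 0 on T_{<=-2}
   and Theta = Theta o jT on T_{-1} = V[1]. *)
Definition mT (G V T : lmodType K) (actT : G -> T -> T) (Th : V -> G)
    (jT : T -> V) (i j : nat) (x y : T) : T :=
  (if i == 1%N then actT (Th (jT x)) y else 0)
  - ((-1 : K) ^+ (i * j)) *: (if j == 1%N then actT (Th (jT y)) x else 0).

(* Koszul signs of the (2,1)-unshuffles acting on x1 ^ x2 ^ x3 of degrees
   -n1, -n2, -n3: (12|3) -> 1, (13|2) -> -(-1)^{n2 n3},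
   (23|1) -> (-1)^{n1 (n2 + n3)}. *)
Definition eps13 (n2 n3 : nat) : K := - ((-1) ^+ (n2 * n3)).
Definition eps23 (n1 n2 n3 : nat) : K := (-1) ^+ (n1 * (n2 + n3)).

Definition m_q (G V T : lmodType K) (br : T -> T -> T) (actT : G -> T -> T)
    (Th : V -> G) (jT : T -> V) (n1 n2 n3 : nat) (x1 x2 x3 : T) : T :=
  mT actT Th jT (n1 + n2) n3 (br x1 x2) x3
  + eps13 n2 n3 *: mT actT Th jT (n1 + n3) n2 (br x1 x3) x2
  + eps23 n1 n2 n3 *: mT actT Th jT (n2 + n3) n1 (br x2 x3) x1.

Definition q_m (G V T : lmodType K) (br : T -> T -> T) (actT : G -> T -> T)
    (Th : V -> G) (jT : T -> V) (n1 n2 n3 : nat) (x1 x2 x3 : T) : T :=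
  br (mT actT Th jT n1 n2 x1 x2) x3
  + eps13 n2 n3 *: br (mT actT Th jT n1 n3 x1 x3) x2
  + eps23 n1 n2 n3 *: br (mT actT Th jT n2 n3 x2 x3) x1.

End LieLeibniz.

(* Main.v *)
Require Import Defs.
From HB Require Import structures.
From mathcomp Require Import all_boot all_order all_algebra.
From mathcomp Require Import zify ring.
Import GRing.Theory.
Local Open Scope ring_scope.
Set Implicit Arguments. Unset Strict Implicit.
Section S.
Variable K : fieldType.
Definition F6 (M : lmodType K) (b : seq M) (c : 'rV[K]_6) : M :=
  \sum_(i < 6) c 0 i *: nth 0 b i.
Lemma F6D M b c d : @F6 M b (c + d) = F6 b c + F6 b d.
Proof. by rewrite /F6 -big_split; apply eq_bigr => i _; rewrite mxE scalerDl. Qed.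
Lemma F6Z M b k c : @F6 M b (k *: c) = k *: F6 b c.
Proof. by rewrite /F6 scaler_sumr; apply eq_bigr => i _; rewrite mxE scalerA. Qed.
Lemma F6N M b c : @F6 M b (- c) = - F6 b c.
Proof. rewrite /F6 -sumrN; apply eq_bigr => i _; by rewrite mxE scaleNr. Qed.
Lemma F6B M b c d : @F6 M b (c - d) = F6 b c - F6 b d.
Proof. by rewrite F6D F6N. Qed.
Lemma F60 M b : @F6 M b 0 = 0.
Proof. by rewrite /F6 big1 // => i _; rewrite mxE scale0r. Qed.
Lemma F6delta (M : lmodType K) (b : seq M) (j : 'I_6) : F6 b (delta_mx 0 j) = nth 0 b j.
Proof.
rewrite /F6 (bigD1 j) //= big1 ?addr0 => [|i Hi]; rewrite mxE /=.
  by rewrite !eqxx scale1r.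
by case: eqP Hi => [->|_]; rewrite ?eqxx // scale0r.
Qed.
Lemma sign01 (n : nat) : (-1 : K) ^+ n = 1 \/ (-1 : K) ^+ n = -1.
Proof. by rewrite -signr_odd; case: odd; [right|left]; rewrite ?expr0 ?expr1. Qed.
Lemma lin0 (U W : lmodType K) (f : U -> W) : lin f -> f 0 = 0.
Proof. move=> H; have := H 1 0 0; rewrite scaler0 addr0 scale1r => E.
by apply: (@addrI _ (f 0)); rewrite addr0 -E. Qed.
Lemma linZ (U W : lmodType K) (f : U -> W) k x : lin f -> f (k *: x) = k *: f x.
Proof. by move=> H; have := H k x 0; rewrite addr0 (lin0 H) addr0. Qed.
Lemma linD (U W : lmodType K) (f : U -> W) x y : lin f -> f (x + y) = f x + f y.
Proof. by move=> H; have := H 1 x y; rewrite !scale1r. Qed.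
Lemma linB (U W : lmodType K) (f : U -> W) x y : lin f -> f (x - y) = f x - f y.
Proof. by move=> H; rewrite (linD _ _ H) -scaleN1r (linZ _ _ H) scaleN1r. Qed.

Lemma comb (T : lmodType K) (b1 b2 b3 b4 b5 b6 : T) (n1 n2 n3 : nat) :
  let s i j := (-1 : K) ^+ (i * j) in
  0 - s (n1 + n2)%N n3 *: (b3 - s n1 n2 *: b6)
  + - s n2 n3 *: (0 - s (n1 + n3)%N n2 *: (b2 - s n1 n3 *: b5))
  + s n1 (n2 + n3)%N *: (0 - s (n2 + n3)%N n1 *: (b1 - s n2 n3 *: b4))
  + ((b1 - s n1 n2 *: b2)
  + - s n2 n3 *: (b4 - s n1 n3 *: b3)
  + s n1 (n2 + n3)%N *: (b5 - s n2 n3 *: b6)) = 0.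
Proof.
move=> s.
set bs := [:: b1; b2; b3; b4; b5; b6].
have e1 : b1 = F6 bs (delta_mx 0 0) by rewrite F6delta.
have e2 : b2 = F6 bs (delta_mx 0 1) by rewrite F6delta.
have e3 : b3 = F6 bs (delta_mx 0 2) by rewrite F6delta.
have e4 : b4 = F6 bs (delta_mx 0 3) by rewrite F6delta.
have e5 : b5 = F6 bs (delta_mx 0 4) by rewrite F6delta.
have e6 : b6 = F6 bs (delta_mx 0 5) by rewrite F6delta.
rewrite e1 e2 e3 e4 e5 e6 !sub0r.
repeat (rewrite -F6Z || rewrite -F6B || rewrite -F6D || rewrite -F6N).
rewrite -[RHS](F60 bs); congr F6.
rewrite /s !mulnDl !mulnDr [(n3 * n2)%N]mulnC [(n2 * n1)%N]mulnC [(n3 * n1)%N]mulnC !exprD.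
apply/rowP => i; rewrite !mxE.
case: (sign01 (n1 * n2)) => ->; case: (sign01 (n1 * n3)) => ->; case: (sign01 (n2 * n3)) => ->;
case: i => -[|[|[|[|[|[|//]]]]]] /= _; ring.
Qed.

End S.
Theorem mainTheorem8 (K : fieldType) (charK : [pchar K] =i pred0)
    (G : lmodType K) (lb : G -> G -> G) (V : lmodType K) (act : G -> V -> V)
    (Th : V -> G) (T : lmodType K) (hom : nat -> T -> Prop) (br : T -> T -> T)
    (actT : G -> T -> T) (iota : V -> T) (jT : T -> V) :
  lie_leibniz_triple lb act Th ->
  assoc_graded_lie lb act Th hom br actT iota jT ->
  forall (n1 n2 n3 : nat) (x1 x2 x3 : T),
    (0 < n1)%N -> (0 < n2)%N -> (0 < n3)%N ->
    hom n1 x1 -> hom n2 x2 -> hom n3 x3 ->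
    m_q br actT Th jT n1 n2 n3 x1 x2 x3 + q_m br actT Th jT n1 n2 n3 x1 x2 x3 = 0.
Proof.
move=> _ [[_ Hbl _ Hanti _] _ [Hact Hhact _ Hder _] _ _] n1 n2 n3 x1 x2 x3 p1 p2 p3 h1 h2 h3.
have ifact b a y : (if b then actT a y else 0) = actT (if b then a else 0) y.
  by case: b => //; rewrite (lin0 (Hact.1 y)).
have brBl x y z : br (x - y) z = br x z - br y z by apply: (linB _ _ (Hbl.1 z)).
have brZl k x z : br (k *: x) z = k *: br x z by apply: (linZ _ _ (Hbl.1 z)).
rewrite /m_q /q_m /mT /eps13 /eps23.
have -> : (n1 + n2 == 1)%N = false by apply/eqP; lia.
have -> : (n1 + n3 == 1)%N = false by apply/eqP; lia.
have -> : (n2 + n3 == 1)%N = false by apply/eqP; lia.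
rewrite !ifact.
move: (if n1 == 1%N then _ else _) (if n2 == 1%N then _ else _) (if n3 == 1%N then _ else _) => a1 a2 a3.
rewrite !Hder.
rewrite (Hanti _ _ x1 (actT a3 x2) h1 (Hhact a3 _ _ h2)).
rewrite (Hanti _ _ x1 (actT a2 x3) h1 (Hhact a2 _ _ h3)).
rewrite (Hanti _ _ x2 (actT a1 x3) h2 (Hhact a1 _ _ h3)).
rewrite !brBl !brZl.
exact: comb.
Qed.
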